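(* $\textsc{DiffBest}(\mathsf{T}\mathsf{S}\mathsf{T},\mathsf{S}\mathsf{T}\mathsf{S}\mathsf{T},n)=\Theta(n)$ and $\textsc{DiffBest}(\mathsf{S}\mathsf{T}\mathsf{S}\mathsf{T},\mathsf{T}\mathsf{S}\mathsf{T},n)=\Theta(n)$, where for sequences $X,Y$, $\textsc{DiffBest}(X,Y,n)=\max\{|\mathrm{Best}_{\succ_X}(r)\setminus\mathrm{Best}_{\succ_Y}(r)|\}$, the maximum taken over all initial preference formulas and all t-relations $r$ with $|r|=n$.
   Context: Fix attribute–taxonomy pairs $A_1{:}T_1,\dots,A_d{:}T_d$ with distinct attribute names, where each taxonomy $T_i=(V_i,\le_{V_i})$ is a poset. A t-tuple over a t-schema $S\subseteq\{A_1{:}T_1,\dots,A_d{:}T_d\}$ maps each $A_i$ in $S$ to a value of $V_i$; $\mathcal{D}$ is the set of all t-tuples over all such t-schemas, and a t-relation is a finite set of t-tuples. A preference relation is a binary relation $\succeq$ on $\mathcal{D}$; its strict part is $t_1\succ t_2$ iff $t_1\succeq t_2$ and not $t_2\succeq t_1$. Preferences are given by a formula $F(x,y)=\bigvee_i P_i(x,y)$, a disjunction of statements; each statement $P_i$ is a disjunction of clauses, each clause a satisfiable conjunction of atoms of the forms $x[A_i]\le_{V_i} v$, $x[A_i]\not\le_{V_i} v$, $y[A_i]\le_{V_i} v$, $y[A_i]\not\le_{V_i} v$; the formula induces $t_1\succeq t_2\iff F(t_1,t_2)$. Operator $\mathsf{T}$ maps a formula to one inducing the transitive closure over $\mathcal{D}$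 of the induced relation. Operator $\mathsf{S}$ (specificity-based refinement): repeat rounds; in a round, for each statement $P_i$ let $\mathrm{Impl}(P_i)$ be the set of statements $P_j$ such that $P_j(t_2,t_1)\Rightarrow P_i(t_1,t_2)$ for all $t_1,t_2\in\mathcal{D}$ but not conversely; simultaneously replace every $P_i$ with nonempty $\mathrm{Impl}(P_i)$ by $P_i(x,y)\wedge\bigwedge_{P_j\in \mathrm{Impl}(P_i)}\neg P_j(y,x)$; stop when no $\mathrm{Impl}$ set is nonempty. After each operator, contradictory clauses and subsumed statements are removed. For $X\in\{\mathsf{T},\mathsf{S}\}^*$, $\succeq_X$ (strict part $\succ_X$) is the relation induced by applying the operators of $X$ in order to the initial formula. The Best operator is $\mathrm{Best}_\succ(r)=\{t_1\in r\mid \nexists t_2\in r,\ t_2\succ t_1\}$. *)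

(* Defs.v *)
From mathcomp Require Import ssreflect ssrfun ssrbool eqtype ssrnat fintype.
From Stdlib Require Import List.

Set Implicit Arguments.
Unset Strict Implicit.

(* Attribute-taxonomy pairs A_1:T_1 ... A_d:T_d, T_i = (V_i, <=_{V_i}) a poset. *)
Record Setting := {
  dim : nat;
  Val : 'I_dim -> Type;
  tle : forall i, Val i -> Val i -> Prop;
  tle_refl : forall i (a : Val i), tle a a;
  tle_antisym : forall i (a b : Val i), tle a b -> tle b a -> a = b;
  tle_trans : forall i (a b c : Val i), tle a b -> tle b c -> tle a c
}.
Arguments Val : clear implicits.

(* A t-tuple over some t-schema: attribute i is in the schema iff t i <> None.
   D is the type of all such t-tuples (all schemas). *)
Definition ttuple (S : Setting) := forall i : 'I_(dim S), option (Val S i).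

Definition rel (S : Setting) := ttuple S -> ttuple S -> Prop.

(* t[A_i] <= v  (false when A_i is not in the schema of t) *)
Definition vle (S : Setting) (t : ttuple S) (i : 'I_(dim S)) (v : Val S i) : Prop :=
  exists a, t i = Some a /\ tle a v.

(* Atoms:  on_x selects x (true) or y (false); pos = true is  z[A_i] <= v,
   pos = false is  z[A_i] \not<= v  (the negation of the former). *)
Record atom (S : Setting) := Atom {
  on_x : bool;
  attr : 'I_(dim S);
  aval : Val S attr;
  pos : bool
}.
Arguments Val : clear implicits.

Definition atom_sem (S : Setting) (a : atom S) : rel S :=
  fun x y =>
    let t := if on_x a then x else y in
    if pos a then vle t (aval a) else ~ vle t (aval a).

Definition clause (S : Setting) := list (atom S).
Definition clause_sem (S : Setting) (c : clause S) : rel S :=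
  fun x y => forall a, List.In a c -> atom_sem a x y.
Definition clause_satisfiable (S : Setting) (c : clause S) : Prop :=
  exists x y, clause_sem c x y.

Definition statement (S : Setting) := list (clause S).
Definition statement_sem (S : Setting) (P : statement S) : rel S :=
  fun x y => exists c, List.In c P /\ clause_sem c x y.

Definition formula (S : Setting) := list (statement S).
Definition valid_formula (S : Setting) (F : formula S) : Prop :=
  forall P, List.In P F -> P <> nil /\
     forall c, List.In c P -> clause_satisfiable c.

(* Semantic level: a formula is represented by the set of (the relations
   induced by) its statements.  Removing contradictory clauses does not
   change the relation of a statement; removing duplicated statements is
   automatic at this level. *)
Definition sformula (S : Setting) := rel S -> Prop.

Definition sem_formula (S : Setting) (F : formula S) : sformula S :=
  fun R => exists P, List.In P F /\ R = statement_sem P.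

Definition induced (S : Setting) (F : sformula S) : rel S :=
  fun x y => exists P, F P /\ P x y.

Definition rsub (S : Setting) (P Q : rel S) : Prop := forall x y, P x y -> Q x y.
Definition rstrict_sub (S : Setting) (P Q : rel S) : Prop := rsub P Q /\ ~ rsub Q P.

Definition cleanup (S : Setting) (F : sformula S) : sformula S :=
  fun P => F P /\ ~ (exists Q, F Q /\ rstrict_sub P Q).

(* Operator T: statements of T(F) are the compositions of nonempty chains of
   statements of F (their disjunction is the transitive closure over D). *)
Definition rcomp (S : Setting) (P Q : rel S) : rel S :=
  fun x y => exists z, P x z /\ Q z y.

Inductive chain (S : Setting) (F : sformula S) : rel S -> Prop :=
| chain1 P : F P -> chain F P
| chainS P R : F P -> chain F R -> chain F (rcomp P R).

Definition opT (S : Setting) (F : sformula S) : sformula S := cleanup (chain F).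

Definition Impl (S : Setting) (F : sformula S) (P Q : rel S) : Prop :=
  F Q /\ (forall t1 t2, Q t2 t1 -> P t1 t2) /\ ~ (forall t1 t2, P t1 t2 -> Q t2 t1).

Definition refine (S : Setting) (F : sformula S) (P : rel S) : rel S :=
  fun x y => P x y /\ forall Q, Impl F P Q -> ~ Q y x.

Definition round (S : Setting) (F : sformula S) : sformula S :=
  fun P' => exists P, F P /\ P' = refine F P.

Definition stable (S : Setting) (F : sformula S) : Prop :=
  forall P Q, F P -> ~ Impl F P Q.

Definition opS (S : Setting) (F G : sformula S) : Prop :=
  exists k, (forall j, j < k -> ~ stable (iter j (@round S) F))
         /\ stable (iter k (@round S) F)
         /\ G = cleanup (iter k (@round S) F).

Inductive op := OpT | OpS.

Inductive apply_ops (S : Setting) : list op -> sformula S -> sformula S -> Prop :=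
| ao_nil F : apply_ops nil F F
| ao_T X F G : apply_ops X (opT F) G -> apply_ops (OpT :: X) F G
| ao_S X F F' G : opS F F' -> apply_ops X F' G -> apply_ops (OpS :: X) F G.

Definition strict (S : Setting) (R : rel S) : rel S := fun x y => R x y /\ ~ R y x.

Definition Best (S : Setting) (succ : rel S) (r : list (ttuple S)) (t : ttuple S) : Prop :=
  List.In t r /\ ~ (exists t2, List.In t2 r /\ succ t2 t).

Definition card_is (S : Setting) (P : ttuple S -> Prop) (k : nat) : Prop :=
  exists s, List.NoDup s /\ (forall t, List.In t s <-> P t) /\ List.length s = k.

Definition DiffVal (X Y : list op) (n k : nat) : Prop :=
  exists (S : Setting) (F0 : formula S) (GX GY : sformula S) (r : list (ttuple S)),
    valid_formula F0 /\
    List.NoDup r /\ List.length r = n /\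
    apply_ops X (sem_formula F0) GX /\ apply_ops Y (sem_formula F0) GY /\
    card_is (fun t => Best (strict (induced GX)) r t /\
                      ~ Best (strict (induced GY)) r t) k.

Definition IsDiffBest (X Y : list op) (n m : nat) : Prop :=
  DiffVal X Y n m /\ forall k, DiffVal X Y n k -> k <= m.

(* f(n) = Theta(n), with f given as the relation "m = f(n)" *)
Definition ThetaN (f : nat -> nat -> Prop) : Prop :=
  exists a b N, 0 < a /\ 0 < b /\
    forall n, N <= n -> exists m, f n m /\ n <= a * m /\ m <= b * n.

(* Main.v *)
Require Import Defs.
From mathcomp Require Import ssreflect ssrfun ssrbool eqtype ssrnat fintype.
From Stdlib Require Import List.
From Stdlib Require Import Classical FunctionalExtensionality PropExtensionality.
Set Implicit Arguments.
Unset Strict Implicit.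

Section Gen.
Variable S : Setting.
Notation R := (ttuple S -> ttuple S -> Prop).

Lemma relext (P Q : R) : (forall x y, P x y <-> Q x y) -> P = Q.
Proof.
  move=> H; apply: functional_extensionality => x; apply: functional_extensionality => y.
  apply: propositional_extensionality; exact: H.
Qed.

Lemma sfext (F G : sformula S) : (forall P, F P <-> G P) -> F = G.
Proof.
  move=> H; apply: functional_extensionality => P; apply: propositional_extensionality; exact: H.
Qed.

Definition One (M : R) : sformula S := fun P => P = M.
Definition Two (M N : R) : sformula S := fun P => P = M \/ P = N.

Lemma rsub_antisym (P Q : R) : rsub P Q -> rsub Q P -> P = Q.
Proof. move=> H1 H2; apply: relext => x y; split; [apply: H1 | apply: H2]. Qed.

Lemma opT_max (F : sformula S) (M : R) :
  (forall P, chain F P -> rsub P M) -> chain F M -> opT F = One M.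
Proof.
  move=> Hs Hc; apply: sfext => P; split.
  - case=> HP Hn. have HPM := Hs _ HP.
    destruct (classic (rsub M P)) as [H|H].
    + exact: rsub_antisym.
    + exfalso; apply: Hn; exists M; split => //.
  - move=> ->; split => //.
    case=> Q [HQ [H1 H2]]; apply: H2; exact: Hs.
Qed.

Lemma rcomp_mono (P : R) {Q1 Q2 : R} : rsub Q1 Q2 -> rsub (rcomp P Q1) (rcomp P Q2).
Proof. move=> H x y [z [h1 h2]]; exists z; split => //; exact: H. Qed.

Lemma opT_one (M : R) : rsub (rcomp M M) M -> opT (One M) = One M.
Proof.
  move=> H; apply: opT_max; last by apply: chain1.
  move=> P; elim => [P0 -> | P0 R0 -> _ IH] //.
  move=> x y h; apply: H; move: h; exact: rcomp_mono.
Qed.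

Lemma cleanup_one (M : R) : cleanup (One M) = One M.
Proof.
  apply: sfext => P; split; first by case.
  move=> ->; split => //; case=> Q [-> [_ h]]; apply: h => x y; exact.
Qed.

Lemma cleanup_two (M N : R) : ~ rsub M N -> ~ rsub N M -> cleanup (Two M N) = Two M N.
Proof.
  move=> h1 h2; apply: sfext => P; split; first by case.
  move=> HP; split => //; case=> Q [HQ [h3 h4]].
  case: HP => HP; case: HQ => HQ; subst.
  - apply: h4 => x y; exact.
  - exact: h1.
  - exact: h2.
  - apply: h4 => x y; exact.
Qed.

Lemma opS0 (F : sformula S) : stable F -> opS F (cleanup F).
Proof. move=> h; exists 0; split => //. Qed.

Lemma opS1 (F : sformula S) : ~ stable F -> stable (round F) -> opS F (cleanup (round F)).
Proof. move=> h1 h2; exists 1; split => //; by case. Qed.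

Definition inv (P : R) : R := fun x y => P y x.

Lemma stable_by (F : sformula S) :
  (forall P Q, F P -> F Q -> ~ rsub (inv Q) P) -> stable F.
Proof. move=> h P Q HP [HQ [h1 h2]]; exact: (h P Q HP HQ h1). Qed.

Lemma stable_one (M : R) : (rsub (inv M) M -> rsub M (inv M)) -> stable (One M).
Proof. move=> h P Q -> [-> [h1 h2]]; apply: h2; exact: h. Qed.

Lemma refine_none (F : sformula S) P : (forall Q, ~ Impl F P Q) -> refine F P = P.
Proof.
  move=> h; apply: relext => x y; split; first by case.
  move=> hp; split => // Q hi; case: (h _ hi).
Qed.

Lemma refine_unique (F : sformula S) P Q0 : (forall Q, Impl F P Q <-> Q = Q0) ->
  refine F P = (fun x y => P x y /\ ~ Q0 y x).
Proof.
  move=> h; apply: relext => x y; split.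
  - case=> hp hq; split => //; apply: hq; by apply/h.
  - case=> hp hq; split => // Q /h ->; exact.
Qed.

Lemma induced_one M : induced (One M) = M.
Proof. apply: relext => x y; split; [by case=> P [-> h] | move=> h; by exists M]. Qed.

Lemma induced_two M N x y : induced (Two M N) x y <-> M x y \/ N x y.
Proof.
  split; first by case=> P [[->|->] h]; [left|right].
  case=> h; [exists M | exists N]; split => //; [left|right] => //.
Qed.

Lemma pipeTST (F : sformula S) (M : R) :
  opT F = One M -> (rsub (inv M) M -> rsub M (inv M)) -> rsub (rcomp M M) M ->
  apply_ops (OpT :: OpS :: OpT :: nil) F (One M).
Proof.
  move=> h1 h2 h3; apply: ao_T; rewrite h1.
  apply: (ao_S (F' := One M)); first by rewrite -{2}(cleanup_one M); apply: opS0; exact: stable_one.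
  apply: ao_T; rewrite opT_one //; exact: ao_nil.
Qed.

End Gen.

Section Gen2.
Variable S : Setting.
Notation R := (ttuple S -> ttuple S -> Prop).
Lemma opT_two (M N : R) :
  (forall P, chain (Two M N) P -> rsub P M \/ rsub P N) -> ~ rsub M N -> ~ rsub N M ->
  opT (Two M N) = Two M N.
Proof.
  move=> Hi h1 h2; apply: sfext => P; split.
  - case=> HP Hn; case: (Hi _ HP) => hs.
    + case: (classic (rsub M P)) => h.
      * left; exact: rsub_antisym.
      * exfalso; apply: Hn; exists M; split; [apply: chain1; by left | by split].
    + case: (classic (rsub N P)) => h.
      * right; exact: rsub_antisym.
      * exfalso; apply: Hn; exists N; split; [apply: chain1; by right | by split].
  - move=> HP; split; first by apply: chain1.
    case=> Q [HQ [h3 h4]]; case: (Hi _ HQ) => hs; case: HP => HP; subst.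
    + exact: h4.
    + apply: h2 => x y h; exact: hs (h3 _ _ h).
    + apply: h1 => x y h; exact: hs (h3 _ _ h).
    + exact: h4.
Qed.
End Gen2.

Section Gen3.
Variable S : Setting.
Notation R := (ttuple S -> ttuple S -> Prop).
Lemma cleanup_two_sub (M N : R) : rsub M N -> ~ rsub N M -> cleanup (Two M N) = One N.
Proof.
  move=> h1 h2; apply: sfext => P; split.
  - case=> [[->|->] Hn] //; exfalso; apply: Hn; exists N; split; [by right | by split].
  - move=> ->; split; first by right.
    case=> Q [[->|->] [h3 h4]]; first exact: h2.
    apply: h4 => x y; exact.
Qed.
End Gen3.
Unset Implicit Arguments.
From mathcomp Require Import zify.
From Stdlib Require Import Lia.

Definition Sx : Setting.
refine {| dim := 1; Val := fun _ => option nat; tle := fun _ a b => a = b \/ b = None |}.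
- intros; left; reflexivity.
- intros i a b [H|H] [H'|H']; congruence.
- intros i a b c [H|H] [H'|H']; subst; auto.
Defined.

Definition T := ttuple Sx.
Definition o0 : 'I_(dim Sx) := @ord0 0.
Definition hA (t : T) : Prop := @vle Sx t o0 (None : option nat).
Definition C (t : T) : Prop := @vle Sx t o0 (Some 0 : option nat).
Definition d (i : nat) : T := fun _ => Some (Some i).
Definition zt : T := fun _ => None.

Lemma hA_d i : hA (d i).
Proof. exists (Some i); split => //; by right. Qed.
Lemma C_d0 : C (d 0).
Proof. exists (Some 0); split => //; by left. Qed.
Lemma C_d i : C (d i) -> i = 0.
Proof. case=> a [[<-] [h|h]] //; congruence. Qed.
Lemma hA_zt : ~ hA zt.
Proof. by case=> a []. Qed.
Lemma C_hA t : C t -> hA t.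
Proof. case=> a [h _]; exists a; split => //; by right. Qed.
Lemma d_inj i j : d i = d j -> i = j.
Proof. move=> h; have := f_equal (fun f => f o0) h; by case. Qed.
Lemma d_zt i : d i <> zt.
Proof. move=> h; have := f_equal (fun f => f o0) h; by []. Qed.

Definition at_ (b : bool) (v : option nat) (p : bool) : atom Sx := @Atom Sx b o0 v p.

Definition Tot (x y : T) := hA x /\ hA y.
Definition Qr (x y : T) := C x /\ hA y.
Definition Pp (x y : T) := Tot x y /\ ~ Qr y x.

Definition st1 : statement Sx := (at_ true None true :: at_ false None true :: nil) :: nil.
Definition st2 : statement Sx := (at_ true (Some 0) true :: at_ false None true :: nil) :: nil.
Definition F1 : formula Sx := st1 :: st2 :: nil.

Lemma sem_st2 (a1 a2 : atom Sx) (Q : T -> T -> Prop) :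
  (forall x y, Q x y <-> atom_sem a1 x y /\ atom_sem a2 x y) ->
  statement_sem ((a1 :: a2 :: nil) :: nil) = Q.
Proof.
  move=> h; apply: relext => x y; rewrite h; split.
  - case=> c [[<-|[]] hc]; split; apply: hc; simpl; auto.
  - case=> h1 h2; exists (a1 :: a2 :: nil); split; first by left.
    move=> a [<-|[<-|[]]] //.
Qed.

Lemma sem_F1 : sem_formula F1 = Two Tot Qr.
Proof.
  have e1 : statement_sem st1 = Tot by apply: sem_st2.
  have e2 : statement_sem st2 = Qr by apply: sem_st2.
  apply: sfext => P; split.
  - case=> P0 [[<-|[<-|[]]] ->]; [left|right] => //.
  - case=> ->; [exists st1 | exists st2]; split => //; simpl; auto.
Qed.

Lemma valid_F1 : valid_formula F1.
Proof.
  move=> P [<-|[<-|[]]]; split => // c [<-|[]]; exists (d 0), (d 0);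
  move=> a [<-|[<-|[]]]; simpl; (apply: hA_d || apply: C_d0).
Qed.

Lemma d1_nC : ~ C (d 1).
Proof. by move/C_d. Qed.

Lemma impl_Tot Q : Impl (Two Tot Qr) Tot Q <-> Q = Qr.
Proof.
  split.
  - case=> [[->|->] [h1 h2]] //; exfalso; apply: h2 => t1 t2 [a b]; by split.
  - move=> ->; split; first by right.
    split.
    + move=> t1 t2 [a b]; split => //; exact: C_hA.
    + move=> h; apply: d1_nC; case: (h (d 1) (d 1)) => //; split; exact: hA_d.
Qed.

Lemma impl_Qr Q : ~ Impl (Two Tot Qr) Qr Q.
Proof.
  case=> [[->|->] [h1 h2]].
  - apply: d1_nC; case: (h1 (d 1) (d 1)) => //; split; exact: hA_d.
  - apply: d1_nC; case: (h1 (d 1) (d 0)) => //; split; [exact: C_d0 | exact: hA_d].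
Qed.

Lemma round_F1 : round (Two Tot Qr) = Two Pp Qr.
Proof.
  have e1 : refine (Two Tot Qr) Tot = Pp by rewrite (refine_unique impl_Tot).
  have e2 : refine (Two Tot Qr) Qr = Qr by rewrite refine_none //; exact: impl_Qr.
  apply: sfext => P; split.
  - case=> P0 [[->|->] ->]; [left|right] => //.
  - case=> ->; [exists Tot | exists Qr]; split => //; [left|right] => //.
Qed.

Lemma Pp_d0d1 : Pp (d 0) (d 1).
Proof. split; first by split; exact: hA_d. by case=> /d1_nC. Qed.
Lemma Pp_d1d1 : Pp (d 1) (d 1).
Proof. split; first by split; exact: hA_d. by case=> /d1_nC. Qed.
Lemma Qr_d0 i : Qr (d 0) (d i).
Proof. split; [exact: C_d0 | exact: hA_d]. Qed.
Lemma nPp_d0 t : ~ Pp t (d 0).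
Proof. case=> [[a b]] h; apply: h; split => //; exact: C_d0. Qed.

Lemma stable_PQ : stable (Two Pp Qr).
Proof.
  apply: stable_by => P Q [->|->] [->|->] h.
  - apply: (nPp_d0 (d 1)); apply: h; exact: Pp_d0d1.
  - apply: (nPp_d0 (d 1)); apply: h; exact: (Qr_d0 1).
  - apply: d1_nC; have : Qr (d 1) (d 1) by apply: h; exact: Pp_d1d1.
    by case.
  - apply: d1_nC; have : Qr (d 1) (d 0) by apply: h; exact: (Qr_d0 1).
    by case.
Qed.

Lemma chain_PQ P : chain (Two Pp Qr) P -> rsub P Pp \/ rsub P Qr.
Proof.
  elim=> [P0 [->|->] | P0 R0 [->|->] _ [IH|IH]]; try by [left|right].
  - left => x y [z [[[hx hz] nq] /IH [[_ hy] nq2]]]; split; first by split.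
    case=> cy _; apply: nq2; by split.
  - left => x y [z [[[hx hz] nq] /IH [cz hy]]]; exfalso; apply: nq; by split.
  - right => x y [z [[cx hz] /IH [[_ hy] _]]]; by split.
  - right => x y [z [[cx hz] /IH [_ hy]]]; by split.
Qed.

Lemma nsub_PQ : ~ rsub Pp Qr.
Proof. move=> h; case: (h _ _ Pp_d1d1) => /d1_nC //. Qed.
Lemma nsub_QP : ~ rsub Qr Pp.
Proof. move=> h; exact: (nPp_d0 _ (h (d 0) (d 0) (Qr_d0 0))). Qed.

Lemma apply_Y1 : apply_ops (OpS :: OpT :: OpS :: OpT :: nil) (sem_formula F1) (Two Pp Qr).
Proof.
  rewrite sem_F1.
  have eT : opT (Two Pp Qr) = Two Pp Qr by apply: opT_two; [exact: chain_PQ|exact: nsub_PQ|exact: nsub_QP].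
  have eC : cleanup (Two Pp Qr) = Two Pp Qr by apply: cleanup_two; [exact: nsub_PQ|exact: nsub_QP].
  apply: (ao_S (F' := Two Pp Qr)).
  - rewrite -eC -round_F1; apply: opS1; last by rewrite round_F1; exact: stable_PQ.
    move=> h; apply: (h Tot Qr); [by left | by apply/impl_Tot].
  - apply: ao_T; rewrite eT.
    apply: (ao_S (F' := Two Pp Qr)); first by rewrite -{2}eC; apply: opS0; exact: stable_PQ.
    apply: ao_T; rewrite eT; exact: ao_nil.
Qed.

Lemma apply_X1 : apply_ops (OpT :: OpS :: OpT :: nil) (sem_formula F1) (One Tot).
Proof.
  rewrite sem_F1; apply: pipeTST.
  - apply: opT_max; last by apply: chain1; left.
    move=> P; elim=> [P0 [->|->] | P0 R0 [->|->] _ IH] x y //.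
    + case=> a b; split => //; exact: C_hA.
    + case=> z [[a _] /IH [_ b]]; by split.
    + case=> z [[a _] /IH [_ b]]; split => //; exact: C_hA.
  - move=> _ x y [a b]; by split.
  - move=> x y [z [[a _] [_ b]]]; by split.
Qed.

Definition Ay (x y : T) := hA y.
Definition P1 (x y : T) := hA x /\ ~ C x /\ C y.
Definition Zr (x y : T) := ~ hA x /\ C y.
Definition P2 (x y : T) := Tot x y \/ Zr x y.
Definition P2' (x y : T) := P2 x y /\ ~ P1 y x.

Definition s1 : statement Sx :=
  (at_ true None true :: at_ true (Some 0) false :: at_ false (Some 0) true :: nil) :: nil.
Definition s2 : statement Sx :=
  (at_ true None true :: at_ false None true :: nil) ::
  (at_ true None false :: at_ false (Some 0) true :: nil) :: nil.
Definition F2 : formula Sx := s1 :: s2 :: nil.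

Lemma sem_F2 : sem_formula F2 = Two P1 P2.
Proof.
  have e1 : statement_sem s1 = P1.
    apply: relext => x y; split.
    - case=> c [[<-|[]] hc].
      move: (hc _ (or_introl erefl)) (hc _ (or_intror (or_introl erefl)))
            (hc _ (or_intror (or_intror (or_introl erefl)))) => /= a b e.
      by split; [|split].
    - case=> h1 [h2 h3]; exists (hd nil s1); split; first by left.
      move=> a [<-|[<-|[<-|[]]]] //.
  have e2 : statement_sem s2 = P2.
    apply: relext => x y; split.
    - case=> c [[<-|[<-|[]]] hc];
      move: (hc _ (or_introl erefl)) (hc _ (or_intror (or_introl erefl))) => /= a b;
      [left|right]; by split.
    - case=> [[h1 h2]|[h1 h2]]; [exists (hd nil s2) | exists (hd nil (tl s2))];
      (split; first by simpl; auto); move=> a [<-|[<-|[]]] //.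
  apply: sfext => P; split.
  - case=> P0 [[<-|[<-|[]]] ->]; [left|right] => //.
  - case=> ->; [exists s1 | exists s2]; split => //; simpl; auto.
Qed.

Lemma valid_F2 : valid_formula F2.
Proof.
  move=> P [<-|[<-|[]]]; split => //.
  - move=> c [<-|[]]; exists (d 1), (d 0); move=> a [<-|[<-|[<-|[]]]]; simpl.
    + exact: hA_d.
    + exact: d1_nC.
    + exact: C_d0.
  - move=> c [<-|[<-|[]]].
    + exists (d 0), (d 0); move=> a [<-|[<-|[]]]; simpl; exact: hA_d.
    + exists zt, (d 0); move=> a [<-|[<-|[]]]; simpl; [exact: hA_zt | exact: C_d0].
Qed.

Lemma P1_d1d0 : P1 (d 1) (d 0).
Proof. split; [exact: hA_d | split; [exact: d1_nC | exact: C_d0]]. Qed.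
Lemma nP1_d0 t : ~ P1 (d 0) t.
Proof. case=> _ [h _]; exact: h C_d0. Qed.
Lemma nP1_d1 : ~ P1 (d 1) (d 1).
Proof. case=> _ [_ /d1_nC] //. Qed.
Lemma P2_d1d1 : P2 (d 1) (d 1).
Proof. left; split; exact: hA_d. Qed.
Lemma P2_ztd0 : P2 zt (d 0).
Proof. right; split; [exact: hA_zt | exact: C_d0]. Qed.
Lemma nP2_d0zt : ~ P2 (d 0) zt.
Proof. case=> [[_ h]|[h _]]; [exact: hA_zt h | exact: h (hA_d 0)]. Qed.

Lemma impl_P1 Q : ~ Impl (Two P1 P2) P1 Q.
Proof.
  case=> [[->|->] [h1 h2]].
  - apply: (nP1_d0 (d 1)); apply: h1; exact: P1_d1d0.
  - apply: nP1_d1; apply: h1; exact: P2_d1d1.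
Qed.

Lemma impl_P2 Q : Impl (Two P1 P2) P2 Q <-> Q = P1.
Proof.
  split.
  - case=> [[->|->] [h1 h2]] //; exfalso; apply: nP2_d0zt; apply: h1; exact: P2_ztd0.
  - move=> ->; split; first by left.
    split.
    + move=> t1 t2 [a [b c]]; left; split => //; exact: C_hA.
    + move=> h; apply: nP1_d1; apply: h; exact: P2_d1d1.
Qed.

Lemma round_F2 : round (Two P1 P2) = Two P1 P2'.
Proof.
  have e1 : refine (Two P1 P2) P2 = P2' by rewrite (refine_unique impl_P2).
  have e2 : refine (Two P1 P2) P1 = P1 by rewrite refine_none //; exact: impl_P1.
  apply: sfext => P; split.
  - case=> P0 [[->|->] ->]; [left|right] => //.
  - case=> ->; [exists P1 | exists P2]; split => //; [left|right] => //.
Qed.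

Lemma P2'_d1d1 : P2' (d 1) (d 1).
Proof. split; [exact: P2_d1d1 | exact: nP1_d1]. Qed.
Lemma P2'_ztd0 : P2' zt (d 0).
Proof. split; [exact: P2_ztd0 | exact: nP1_d0]. Qed.
Lemma nP2'_d0zt : ~ P2' (d 0) zt.
Proof. case=> h _; exact: nP2_d0zt h. Qed.

Lemma stable_P12 : stable (Two P1 P2').
Proof.
  apply: stable_by => P Q [->|->] [->|->] h.
  - apply: (nP1_d0 (d 1)); apply: h; exact: P1_d1d0.
  - apply: nP1_d1; apply: h; exact: P2'_d1d1.
  - have : P2' (d 0) (d 1) by apply: h; exact: P1_d1d0.
    case=> _ h2; exact: h2 P1_d1d0.
  - apply: nP2'_d0zt; apply: h; exact: P2'_ztd0.
Qed.

Lemma sub_P1P2' : rsub P1 P2'.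
Proof.
  move=> x y [a [b c]]; split; first by left; split => //; exact: C_hA.
  case=> _ [h _]; exact: h c.
Qed.
Lemma nsub_P2'P1 : ~ rsub P2' P1.
Proof. move=> h; apply: nP1_d1; apply: h; exact: P2'_d1d1. Qed.

Lemma comp_P2' : rsub (rcomp P2' P2') P2'.
Proof.
  move=> x y [z [[h1 n1] [h2 n2]]].
  have hz : hA z by case: h1 => [[_ ?]|[_ ?]] //; exact: C_hA.
  have hy : hA y by case: h2 => [[_ ?]|[? _]] //.
  case: (classic (hA x)) => hx.
  - split; first by left.
    case=> _ [ncy cx].
    have ncz : ~ C z by move=> cz; apply: n2; split => //.
    apply: n1; split => //.
  - case: h1 => [[hx2 _]|[_ cz]]; first by case: (hx hx2).
    have cy : C y by apply: NNPP => ncy; apply: n2; split => //.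
    split; first by right.
    case=> _ [_ cx]; exact: hx (C_hA _ cx).
Qed.

Lemma stable_P2' : rsub (inv P2') P2' -> rsub P2' (inv P2').
Proof. move=> h; exfalso; apply: nP2'_d0zt; apply: h; exact: P2'_ztd0. Qed.

Lemma apply_X2 : apply_ops (OpS :: OpT :: OpS :: OpT :: nil) (sem_formula F2) (One P2').
Proof.
  rewrite sem_F2.
  apply: (ao_S (F' := One P2')).
  - rewrite -(cleanup_two_sub sub_P1P2' nsub_P2'P1) -round_F2; apply: opS1.
    + move=> h; apply: (h P2 P1); [by right | by apply/impl_P2].
    + rewrite round_F2; exact: stable_P12.
  - apply: pipeTST; [exact: opT_one comp_P2' | exact: stable_P2' | exact: comp_P2'].
Qed.

Lemma apply_Y2 : apply_ops (OpT :: OpS :: OpT :: nil) (sem_formula F2) (One Ay).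
Proof.
  rewrite sem_F2; apply: pipeTST.
  - apply: opT_max.
    + move=> P; elim=> [P0 [->|->] | P0 R0 _ _ IH] x y //.
      * case=> _ [_ c]; exact: C_hA.
      * case=> [[_ ?]|[_ ?]] //; exact: C_hA.
      * case=> z [_ /IH] //.
    + have -> : Ay = rcomp P2 P2.
        apply: relext => x y; split.
        - move=> hy; exists (d 0); split.
          + case: (classic (hA x)) => hx; [left; split => //; exact: hA_d | right; split => //; exact: C_d0].
          + left; split => //; exact: hA_d.
        - case=> z [_ [[_ ?]|[_ ?]]] //; exact: C_hA.
      apply: chainS; [by right | apply: chain1; by right].
  - move=> h; exfalso; apply: hA_zt; apply: (h (d 0) zt); exact: hA_d.
  - move=> x y [z [_ ?]] //.
Qed.

Lemma NoDup_md l : NoDup l -> NoDup (map d l).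
Proof.
  move=> h; apply: NoDup_map_NoDup_ForallPairs => //.
  move=> a b _ _; exact: d_inj.
Qed.

Lemma in_md t a b : In t (map d (seq a b)) <-> exists i, t = d i /\ (a <= i < a + b).
Proof.
  rewrite in_map_iff; split.
  - case=> i [<- /in_seq h]; exists i; split => //; lia.
  - case=> i [-> h]; exists i; split => //; apply/in_seq; lia.
Qed.

Lemma diff1 n' : DiffVal (OpT :: OpS :: OpT :: nil) (OpS :: OpT :: OpS :: OpT :: nil) n'.+1 n'.
Proof.
  exists Sx, F1, (One Tot), (Two Pp Qr), (map d (seq 0 n'.+1)).
  split; first exact: valid_F1.
  split; first by apply: NoDup_md; apply: seq_NoDup.
  split; first by rewrite length_map length_seq.
  split; first exact: apply_X1.
  split; first exact: apply_Y1.
  exists (map d (seq 1 n')); split; first by apply: NoDup_md; apply: seq_NoDup.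
  split; last by rewrite length_map length_seq.
  move=> t; rewrite induced_one; split.
  - move/in_md=> [i [-> hi]]; split.
    + split; first by apply/in_md; exists i; split => //; lia.
      case=> t2 [_ [h1 h2]]; apply: h2; case: h1 => a b; by split.
    + case=> _ h; apply: h; exists (d 0); split; first by apply/in_md; exists 0; split => //; lia.
      split; first by apply/induced_two; right; exact: Qr_d0.
      move/induced_two => [h1|[h1 _]]; first exact: (nPp_d0 _ h1).
      move/C_d: h1 => h1; lia.
  - case=> [[/in_md [i [-> hi]] _] nB].
    case: (PeanoNat.Nat.eq_dec i 0) => [e|ne].
    + exfalso; subst i; apply: nB; split; first by apply/in_md; exists 0; split => //; lia.
      case=> t2 [_ [/induced_two h1 h2]]; apply: h2; apply/induced_two.
      case: h1 => [h1|[c2 _]]; first by case: (nPp_d0 _ h1).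
      right; split; [exact: C_d0 | exact: C_hA].
    + apply/in_md; exists i; split => //; lia.
Qed.

Lemma diff2 n' : DiffVal (OpS :: OpT :: OpS :: OpT :: nil) (OpT :: OpS :: OpT :: nil) n'.+1 n'.
Proof.
  exists Sx, F2, (One P2'), (One Ay), (zt :: map d (seq 1 n')).
  split; first exact: valid_F2.
  split.
    apply: NoDup_cons; last by apply: NoDup_md; apply: seq_NoDup.
    by move/in_md=> [i [h _]]; apply: (d_zt i).
  split; first by rewrite /= length_map length_seq.
  split; first exact: apply_X2.
  split; first exact: apply_Y2.
  exists (map d (seq 1 n')); split; first by apply: NoDup_md; apply: seq_NoDup.
  split; last by rewrite length_map length_seq.
  move=> t; rewrite !induced_one; split.
  - move=> hin; have := hin; move/in_md=> [i [-> hi]].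
    have nC : ~ C (d i) by move/C_d => e; lia.
    split.
    + split; first by right; apply/in_md; exists i.
      case=> t2 [_ [[h1 n1] h2]]; apply: h2.
      case: h1 => [[ha hb]|[_ c]]; last by case: (nC c).
      split; first by left; split.
      case=> _ [_ c]; exact: nC c.
    + case=> _ h; apply: h; exists zt; split; first by left.
      split; [exact: hA_d | exact: hA_zt].
  - case=> [[[<-|hin] _] nB] //.
    exfalso; apply: nB; split; first by left.
    case=> t2 [_ [h _]]; exact: hA_zt h.
Qed.

Lemma max_ex (P : nat -> Prop) B : (exists k, P k) -> (forall k, P k -> k <= B) ->
  exists m, P m /\ forall k, P k -> k <= m.
Proof.
  elim: B => [|B IH] [k0 h0] hb.
  - exists k0; split => // k /hb; lia.
  - case: (classic (P B.+1)) => hP.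
    + by exists B.+1.
    + apply: IH; first by exists k0.
      move=> k hk; have := hb _ hk; case: (PeanoNat.Nat.eq_dec k B.+1) => [e|ne].
      * by subst.
      * lia.
Qed.

Lemma diff_le X Y n k : DiffVal X Y n k -> k <= n.
Proof.
  case=> S0 [F0 [GX [GY [r [_ [_ [<- [_ [_ [s [hs [hi <-]]]]]]]]]]]].
  apply/leP; apply: NoDup_incl_length => // t /hi [[h _] _] //.
Qed.

Lemma thetaN_of X Y : (forall n', DiffVal X Y n'.+1 n') -> ThetaN (IsDiffBest X Y).
Proof.
  move=> h; exists 2, 1, 2; split => //; split => // n hn.
  case: n hn => [|n'] hn //.
  case: (@max_ex (DiffVal X Y n'.+1) n'.+1) => [|k|m [hm hmax]].
  - by exists n'; apply: h.
  - exact: diff_le.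
  - exists m; split; first by split.
    have := hmax _ (h n'); have := diff_le _ _ _ _ hm; lia.
Qed.

Theorem mainTheorem12 :
  ThetaN (IsDiffBest (OpT :: OpS :: OpT :: nil) (OpS :: OpT :: OpS :: OpT :: nil)) /\
  ThetaN (IsDiffBest (OpS :: OpT :: OpS :: OpT :: nil) (OpT :: OpS :: OpT :: nil)).
Proof. split; apply: thetaN_of; [exact: diff1 | exact: diff2]. Qed.
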